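(* Assume $a/b>\sqrt2$, $|u|<u_{\max}$ and $a^2+(u^2-2)c^2\ne0$. With $R$ and $R'$ as below, $$\frac1{R^2}+\frac1{R'^2}=\frac1{c^2},$$ i.e. half the harmonic mean of $R^2$ and $R'^2$ equals $c^2=a^2-b^2$, independently of $u$.
   Context: The elliptic billiard is $\mathcal{E}: x^2/a^2+y^2/b^2=1$, $a>b>0$, $c=\sqrt{a^2-b^2}$. For $a/b>\sqrt2$ the self-intersected 4-periodics are parametrized by $u$ with $|u|\le u_{\max}:=\frac{a}{c^2}\sqrt{a^2-2b^2}$. For parameter $u$, the vertices of the self-intersected 4-periodic and the foci lie on a circle of radius $R=\frac{a^2-c^2u^2}{2b\sqrt{1-u^2}}$, and the vertices of its outer polygon (the polygon whose vertices are intersections of tangent lines to $\mathcal{E}$ at consecutive vertices) and the foci lie on a circle of radius $|R'|$, where $R'=\frac{c(c^2u^2-a^2)}{a^2+(u^2-2)c^2}$. *)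

(* Defs.v *)
From Stdlib Require Import Reals.
Open Scope R_scope.

Definition focal_c (a b : R) : R := sqrt (a^2 - b^2).

Definition u_max (a b : R) : R :=
  a / (focal_c a b)^2 * sqrt (a^2 - 2 * b^2).

(* Radius of the circle through the vertices of the self-intersected
   4-periodic and the foci. *)
Definition radR (a b u : R) : R :=
  (a^2 - (focal_c a b)^2 * u^2) / (2 * b * sqrt (1 - u^2)).

(* Signed radius R' of the circle through the vertices of the outer polygon
   and the foci (the radius is |R'|). *)
Definition radR' (a b u : R) : R :=
  let c := focal_c a b in
  c * (c^2 * u^2 - a^2) / (a^2 + (u^2 - 2) * c^2).

(* Main.v *)
Require Import Defs.
From Stdlib Require Import Reals Lra Psatz.
Open Scope R_scope.

Theorem mainTheorem4 (a b u : R) :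
  0 < b -> b < a -> a / b > sqrt 2 ->
  Rabs u < u_max a b ->
  a^2 + (u^2 - 2) * (focal_c a b)^2 <> 0 ->
  1 / (radR a b u)^2 + 1 / (radR' a b u)^2 = 1 / (focal_c a b)^2.
Proof.
  intros hb hab hs hu hD.
  assert (hC : (focal_c a b)^2 = a^2 - b^2).
  { unfold focal_c. rewrite pow2_sqrt; nra. }
  assert (hc0 : 0 < focal_c a b).
  { unfold focal_c. apply sqrt_lt_R0. nra. }
  assert (ha2 : a^2 > 2 * b^2).
  { assert (h1 : a > sqrt 2 * b).
    { apply Rmult_gt_compat_r with (r := b) in hs; [|lra].
      replace (a / b * b) with a in hs by (field; lra). lra. }
    assert (h2 : sqrt 2 * sqrt 2 = 2) by (apply sqrt_sqrt; lra).
    assert (0 <= sqrt 2) by apply sqrt_pos.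
    assert (0 <= sqrt 2 * b) by nra.
    assert (a * a > (sqrt 2 * b) * (sqrt 2 * b)) by (apply Rmult_gt_0_lt_compat; nra).
    replace ((sqrt 2 * b) * (sqrt 2 * b)) with (sqrt 2 * sqrt 2 * b^2) in * by ring.
    rewrite h2 in *. nra. }
  assert (ht : (sqrt (a^2 - 2*b^2))^2 = a^2 - 2*b^2) by (rewrite pow2_sqrt; nra).
  assert (ht0 : 0 <= sqrt (a^2 - 2*b^2)) by apply sqrt_pos.
  assert (hum : u_max a b < 1).
  { unfold u_max. rewrite hC.
    apply (Rmult_lt_reg_r (a^2-b^2)); [nra|].
    unfold Rdiv. field_simplify; [|nra].
    assert ((a * sqrt (a^2 - 2*b^2))^2 < (a^2-b^2)^2) by (rewrite Rpow_mult_distr, ht; assert (0 < b^4) by (apply pow_lt; lra); nra).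
    nra. }
  assert (hu2 : u^2 < 1).
  { assert (Rabs u < 1) by lra.
    assert (0 <= Rabs u) by apply Rabs_pos.
    rewrite <- (pow2_abs u). nra. }
  assert (hs2 : (sqrt (1 - u^2))^2 = 1 - u^2) by (rewrite pow2_sqrt; nra).
  assert (hs0 : 0 < sqrt (1 - u^2)) by (apply sqrt_lt_R0; nra).
  unfold radR, radR'.
  set (c := focal_c a b) in *. set (s := sqrt (1 - u^2)) in *.
  assert (hN : a^2 - c^2 * u^2 <> 0) by (rewrite hC; nra).
  assert (hN' : c^2 * u^2 - a^2 <> 0) by lra.
  set (N := a ^ 2 - c ^ 2 * u ^ 2) in *.
  set (D := a ^ 2 + (u ^ 2 - 2) * c ^ 2) in *.
  assert (hM : c ^ 2 * u ^ 2 - a ^ 2 = - N) by (unfold N; ring).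
  rewrite hM.
  replace (1 / (N / (2 * b * s)) ^ 2 + 1 / (c * - N / D) ^ 2)
    with ((4*b^2*s^2*c^2 + D^2)/(c^2*N^2)) by (field; repeat split; lra).
  assert (key : 4*b^2*s^2*c^2 + D^2 = N^2)
    by (unfold D, N; rewrite hs2, hC; ring).
  rewrite key. field. split; lra.
Qed.
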